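(* Let $C$ be a binary linear self-dual code of length $n$ with exact weight enumerator $W$ and derivatives $W_{<t>}$. Then for every integer $t$ with $0\le t\le n-1$ and every $v\in F^{n-t-1}$, $$W_{<t>}[(1)\overline{v}]=(-1)^{wt(v)}\rho^{t}\,\Phi\big(W_{<t>}[(0)v]\big),$$ where $\overline{v}$ is the complement of $v$ (all coordinates flipped), $(0)v$ and $(1)\overline v$ denote prepending $0$, respectively $1$, and $\Phi$ is the nontrivial automorphism of $\mathbb{Q}(\sqrt2)$.
   Context: $F=\{0,1\}$ is the binary field. A binary linear self-dual code $C$ of length $n$ is a linear subspace of $F^n$ of dimension $n/2$ equal to its orthogonal complement under the standard dot product. The exact weight enumerator of $C$ is the vector $W\in\mathbb{Q}^{2^n}$ whose entries are labeled by the vectors of $F^n$ (in lexicographic order), with $W[v]=1$ if $v\in C$ and $W[v]=0$ otherwise. Let $\rho=\sqrt2-1$ and $\mu=-\sqrt2-1$; $\mathbb{Q}(\rho)=\mathbb{Q}(\sqrt2)$ and $\Phi:\mathbb{Q}(\rho)\to\mathbb{Q}(\rho)$ is the field automorphism with $\Phi(\rho)=\mu$ (equivalently $\Phi(\sqrt2)=-\sqrt2$). For $0\le t\le n$, the $t$-th derivative of $W$ is the vector $W_{<t>}$ of length $2^{n-t}$ with entries labeled by $v\in F^{n-t}$ given by $W_{<t>}[v]=\sum_{u\in F^t}\rho^{wt(u)}W[uv]$, where $wt(u)$ is the Hamming weight of $u$ and $uv$ is the concatenation of $u$ and $v$. *)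

(* Defs.v *)
From mathcomp Require Import all_boot all_order all_algebra.
Set Implicit Arguments. Unset Strict Implicit. Unset Printing Implicit Defensive.
Import Order.TTheory GRing.Theory Num.Theory.
Local Open Scope ring_scope.

(* Vectors of F^n = {0,1}^n are n.-tuples of booleans (true = 1). *)

Definition wt (s : seq bool) : nat := count id s.

Definition dotF2 (u v : seq bool) : bool := odd (count id [seq x.1 && x.2 | x <- zip u v]).

Definition addF2 n (u v : n.-tuple bool) : n.-tuple bool :=
  [tuple of [seq x.1 (+) x.2 | x <- zip u v]].

(* C is a linear subspace of F^n (over F_2 this is: contains 0, closed under +). *)
Definition is_linear_code n (C : {set n.-tuple bool}) : Prop :=
  [tuple of nseq n false] \in C /\
  forall u v, u \in C -> v \in C -> addF2 u v \in C.

Definition orth n (C : {set n.-tuple bool}) : {set n.-tuple bool} :=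
  [set v : n.-tuple bool | [forall c in C, ~~ dotF2 v c]].

(* Binary linear self-dual code: linear, of dimension n/2 (i.e. 2 * dim = n,
   i.e. #|C|^2 = 2^n), and equal to its orthogonal complement. *)
Definition self_dual n (C : {set n.-tuple bool}) : Prop :=
  [/\ is_linear_code C, (#|C| ^ 2 = 2 ^ n)%N & C = orth C].

(* The field Q(sqrt 2), modelled as pairs (a, b) of rationals representing
   a + b sqrt 2.  Addition is the componentwise (zmodType) addition on pairs. *)
Definition Q2 := (rat * rat)%type.
Definition q2 (a b : rat) : Q2 := (a, b).
Definition q2mul (x y : Q2) : Q2 := (x.1 * y.1 + 2 * (x.2 * y.2), x.1 * y.2 + x.2 * y.1).
Definition q2one : Q2 := (1, 0).
Definition q2exp (x : Q2) (k : nat) : Q2 := iter k (q2mul x) q2one.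

(* rho = sqrt 2 - 1, mu = - sqrt 2 - 1. *)
Definition rho : Q2 := (-1, 1).
Definition mu : Q2 := (-1, -1).

Definition Phi (x : Q2) : Q2 := (x.1, - x.2).

Definition W n (C : {set n.-tuple bool}) (s : seq bool) : Q2 :=
  if [exists c in C, val c == s] then q2one else 0.

Definition Wder n (C : {set n.-tuple bool}) (t : nat) (v : seq bool) : Q2 :=
  \sum_(u : t.-tuple bool) q2mul (q2exp rho (wt u)) (W C (val u ++ v)).

(* Main.v *)
Require Import Defs.
From mathcomp Require Import all_boot all_order all_algebra.
From mathcomp Require Import ring.
Import GRing.Theory.
Local Open Scope ring_scope.

Lemma q2E (x y : Q2) : x.1 = y.1 -> x.2 = y.2 -> x = y.
Proof. by case: x; case: y => ? ? ? ? /= -> ->. Qed.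

Lemma q2mulC x y : q2mul x y = q2mul y x.
Proof. apply: q2E; rewrite /q2mul /=; ring. Qed.
Lemma q2mulA x y z : q2mul x (q2mul y z) = q2mul (q2mul x y) z.
Proof. apply: q2E; rewrite /q2mul /=; ring. Qed.
Lemma q2mul1 x : q2mul q2one x = x.
Proof. apply: q2E; rewrite /q2mul /=; ring. Qed.
Lemma q2mul0 x : q2mul x 0 = 0.
Proof. apply: q2E; rewrite /q2mul /=; ring. Qed.
Lemma q2mulDr x y z : q2mul x (y + z) = q2mul x y + q2mul x z.
Proof. apply: q2E; rewrite /q2mul /=; ring. Qed.
Lemma PhiD x y : Phi (x + y) = Phi x + Phi y.
Proof. apply: q2E; rewrite /Phi /=; ring. Qed.
Lemma Phi0 : Phi 0 = 0.
Proof. apply: q2E; rewrite /Phi /=; ring. Qed.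
Lemma PhiM x y : Phi (q2mul x y) = q2mul (Phi x) (Phi y).
Proof. apply: q2E; rewrite /Phi /q2mul /=; ring. Qed.

Lemma q2expD x a b : q2exp x (a + b) = q2mul (q2exp x a) (q2exp x b).
Proof.
elim: a => [|a IH] /=; first by rewrite q2mul1.
by rewrite /q2exp /= -/(q2exp x (a+b)) -/(q2exp x a) IH q2mulA.
Qed.
Lemma q2expS x a : q2exp x a.+1 = q2mul x (q2exp x a).
Proof. by []. Qed.
Lemma q2expM x y a : q2exp (q2mul x y) a = q2mul (q2exp x a) (q2exp y a).
Proof.
elim: a => [|a IH]; first by apply: q2E; rewrite /q2mul /=; ring.
rewrite !q2expS IH !q2mulA; congr q2mul; rewrite -!q2mulA; congr q2mul.
by rewrite q2mulC.
Qed.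
Lemma Phiexp x a : Phi (q2exp x a) = q2exp (Phi x) a.
Proof.
elim: a => [|a IH]; first by apply: q2E; rewrite /Phi /=; ring.
by rewrite !q2expS PhiM IH.
Qed.
Lemma sgnexp a : q2exp (-1, 0) a = ((-1) ^+ a, 0).
Proof.
elim: a => [|a IH]; first by [].
rewrite q2expS IH; apply: q2E; rewrite /q2mul /= ?exprS; ring.
Qed.

Lemma dot_self (s : seq bool) : [seq x.1 && x.2 | x <- zip s s] = s.
Proof. by elim: s => //= b s ->; rewrite andbb. Qed.

Lemma count_split (a b : seq bool) : size a = size b ->
  (count id [seq x.1 && x.2 | x <- zip (map negb a) b] +
   count id [seq x.1 && x.2 | x <- zip a b] = count id b)%N.
Proof.
elim: a b => [|x a IH] [|y b] //= [] /IH <-.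
by case: x; case: y => /=; rewrite ?add0n ?addn0 ?addnS ?addSn.
Qed.

Section Code.
Variables (n : nat) (C : {set n.-tuple bool}).
Hypothesis sd : self_dual C.

Lemma orth_mem {c c'} : c \in C -> c' \in C -> ~~ dotF2 c c'.
Proof.
case: sd => _ _ HC cC c'C.
have : c \in orth C by rewrite -HC.
by rewrite inE => /forall_inP; apply.
Qed.

Lemma even_mem {c} : c \in C -> ~~ odd (wt c).
Proof. by move=> cC; have := orth_mem cC cC; rewrite /dotF2 dot_self. Qed.

Lemma compl_mem {c} : c \in C -> map_tuple negb c \in C.
Proof.
case: sd => _ _ HC cC.
rewrite HC inE; apply/forall_inP => c' c'C.
have e : (count id [seq x.1 && x.2 | x <- zip (map negb c) c'] +
   count id [seq x.1 && x.2 | x <- zip c c'] = count id c')%N.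
  by apply: count_split; rewrite !size_tuple.
have h1 := orth_mem cC c'C. have h2 := even_mem c'C.
move: h1 h2; rewrite /dotF2 /wt /= -e oddD.
by case: (odd _); case: (odd _).
Qed.

Lemma W_neg s : W C (map negb s) = W C s.
Proof.
rewrite /W; congr (if _ then _ else _).
apply/existsP/existsP => -[c /andP[cC /eqP e]].
  exists (map_tuple negb c); rewrite compl_mem //=.
  by rewrite e mapK //; exact: negbK.
exists (map_tuple negb c); rewrite compl_mem //= e.
  by [].
Qed.

Lemma W_even s : W C s != 0 -> ~~ odd (wt s).
Proof.
rewrite /W; case: existsP => [[c /andP[cC /eqP <-]] _|]; first exact: even_mem.
by rewrite eqxx.
Qed.
End Code.

Lemma wt_neg (s : seq bool) : wt (map negb s) = (size s - wt s)%N.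
Proof.
rewrite /wt count_map -(count_predC id s) addKn.
by apply: eq_count => x.
Qed.

Lemma wt_cat (a b : seq bool) : wt (a ++ b) = (wt a + wt b)%N.
Proof. by rewrite /wt count_cat. Qed.

Lemma negt_inj t : injective (@map_tuple t _ _ negb).
Proof.
move=> x y e; apply: val_inj.
have : map negb (map negb (val x)) = map negb (map negb (val y)).
  by have /(congr1 val) /= -> := e.
by rewrite !mapK //; exact: negbK.
Qed.

Theorem mainTheorem3 (n : nat) (C : {set n.-tuple bool}) :
  self_dual C ->
  forall (t : nat), (t <= n - 1)%N -> (0 < n)%N ->
  forall v : (n - t - 1).-tuple bool,
    Wder C t (true :: map negb (val v)) =
    q2mul (q2 ((-1) ^+ wt v) 0) (q2mul (q2exp rho t) (Phi (Wder C t (false :: val v)))).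
Proof.
move=> sd t _ _ v.
rewrite /Wder (reindex_inj (@negt_inj t)) /=.
rewrite (big_morph Phi PhiD Phi0).
rewrite (big_morph (q2mul (q2exp rho t)) (q2mulDr _) (q2mul0 _)).
rewrite (big_morph (q2mul _) (q2mulDr _) (q2mul0 _)).
apply: eq_bigr => u _.
have -> : W C (map negb u ++ true :: map negb v) = W C (val u ++ false :: val v).
  by rewrite -(@W_neg _ _ sd) map_cat /= !(mapK negbK).
rewrite PhiM Phiexp.
have -> : Phi (W C (val u ++ false :: val v)) = W C (val u ++ false :: val v).
  by rewrite /W; case: ifP => _; apply: q2E; rewrite /Phi /= ?oppr0.
have [->|nz] := eqVneq (W C (val u ++ false :: val v)) 0.
  by rewrite !q2mul0.
have ev := @W_even _ _ sd _ nz.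
rewrite wt_cat /= add0n in ev.
rewrite !q2mulA; congr q2mul.
rewrite wt_neg size_tuple.
have hu : (wt u <= t)%N by have := count_size id u; rewrite size_tuple.
move: (wt u) hu ev => k hu ev.
have -> : q2exp rho t = q2mul (q2exp rho (t-k)) (q2exp rho k) by rewrite -q2expD subnK.
rewrite -!q2mulA -q2expM.
have -> : q2mul rho (Phi rho) = (-1, 0) by apply: q2E; rewrite /q2mul /=; ring.
rewrite sgnexp [q2mul (q2exp rho (t - k)) _]q2mulC q2mulA.
have -> : q2mul (q2 ((-1) ^+ wt v) 0) ((-1) ^+ k, 0) = q2one.
  have e : (-1) ^+ wt v * (-1) ^+ k = 1 :> rat.
    rewrite -exprD -signr_odd addnC.
    by move: ev => /negPf ->.
  apply: q2E => /=; last ring.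
  by transitivity ((-1) ^+ wt v * (-1) ^+ k : rat); [ring | exact: e].
by rewrite [RHS]q2mul1.
Qed.
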